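(* Let $c\ge1$, $\lambda_1,\lambda_2,\mu_1,\mu_2>0$, let $X$ be the Markov chain described in the context with $X(0)=(0,0)$, fix $\alpha$ with $\mathrm{Re}\,\alpha>0$, and let $\{v_{i,j}\}_{i\ge j\ge0}$ be defined recursively by $v_{0,0}=\pi_{(0,c-1)}(\alpha)$ and, for $i\ge0$, $v_{i+1,0}=\pi_{(i+1,c-1)}(\alpha)$, $v_{i+1,j}=R_1\bigl(v_{i,j-1}+R_2\sum_{k=j}^{i}v_{i,k}\bigr)$ for $1\le j\le i+1$. Then for all $i\ge j\ge0$, $$v_{i,j}=R_1^{\,j}\pi_{(i-j,c-1)}(\alpha)+\sum_{k=j+1}^{i}R_1^{\,k}\pi_{(i-k,c-1)}(\alpha)\sum_{l=1}^{k-j}\frac{j}{k-j}\binom{k-j}{l}\binom{k-1}{l-1}R_2^{\,l}.$$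
   Context: The Markov chain $X=\{(X_1(t),X_2(t))\}_{t\ge0}$ on $\mathbb{N}_0^2$ has as its only nonzero off-diagonal transition rates: $q((i,j),(i+1,j))=\lambda_1$ ($i,j\ge0$); $q((i,j),(i,j+1))=\lambda_2$ ($i,j\ge0$); $q((i,j),(i-1,j))=\max(\min(i,c-j),0)\mu_1$ ($i\ge1$, $j\ge0$); $q((i,j),(i,j-1))=\min(c,j)\mu_2$ ($i\ge0$, $j\ge1$). For $x\in\mathbb{N}_0^2$, $p_x(t)=P(X(t)=x\mid X(0)=(0,0))$ and $\pi_x(\alpha)=\int_0^\infty e^{-\alpha t}p_x(t)\,dt$. For $\lambda,\mu>0$, $\phi_{\lambda,\mu}(s)=\frac{\lambda+\mu+s-\sqrt{(\lambda+\mu+s)^2-4\lambda\mu}}{2\lambda}$ is the Laplace–Stieltjes transform of the busy period of an $M/M/1$ queue (arrival rate $\lambda$, service rate $\mu$) started by one customer. Set $\rho_2=\lambda_2/(c\mu_2)$, $\phi_2=\phi_{\lambda_2,c\mu_2}(\lambda_1+\alpha)$, $r_2=\rho_2\phi_2$, $\Omega_2=\frac{\rho_2\phi_2}{\lambda_2(1-\rho_2\phi_2^2)}$, $R_1=\frac{\lambda_1\Omega_2}{1-r_2\phi_2}$, $R_2=r_2\phi_2$. Empty sums are zero. *)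

(* Defs.v *)
From Stdlib Require Import Reals Lra Lia Arith Factorial Binomial.
From Coquelicot Require Import Coquelicot.
Open Scope R_scope.

Definition state := (nat * nat)%type.

(* Nonzero off-diagonal transition rates q((i,j), .) of the chain. *)
Definition rate_up1 (l1 : R) : R := l1.                       (* (i,j)->(i+1,j) *)
Definition rate_up2 (l2 : R) : R := l2.                       (* (i,j)->(i,j+1) *)
Definition rate_down1 (c : nat) (m1 : R) (i j : nat) : R :=    (* (i,j)->(i-1,j), i>=1 *)
  Rmax (IZR (Z.min (Z.of_nat i) (Z.of_nat c - Z.of_nat j))) 0 * m1.
Definition rate_down2 (c : nat) (m2 : R) (j : nat) : R :=      (* (i,j)->(i,j-1), j>=1 *)
  INR (Nat.min c j) * m2.

Definition out_rate (c : nat) (l1 l2 m1 m2 : R) (i j : nat) : R :=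
  l1 + l2 + (if Nat.eqb i 0 then 0 else rate_down1 c m1 i j)
          + (if Nat.eqb j 0 then 0 else rate_down2 c m2 j).

(* Uniformization constant: a uniform bound on all outflow rates. *)
Definition unif (c : nat) (l1 l2 m1 m2 : R) : R := l1 + l2 + INR c * (m1 + m2).

(* Distribution after n steps of the uniformized jump chain
   P = I + Q / unif, started at (0,0).  Only the (finitely many)
   predecessors of y contribute. *)
Fixpoint jump_dist (c : nat) (l1 l2 m1 m2 : R) (n : nat) (y : state) : R :=
  let q := unif c l1 l2 m1 m2 in
  let (i, j) := y in
  match n with
  | O => if (Nat.eqb i 0 && Nat.eqb j 0)%bool then 1 else 0
  | S n' =>
      let p := jump_dist c l1 l2 m1 m2 n' in
      p (i, j) * (1 - out_rate c l1 l2 m1 m2 i j / q)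
      + (match i with O => 0 | S i' => p (i', j) * (l1 / q) end)
      + (match j with O => 0 | S j' => p (i, j') * (l2 / q) end)
      + p (S i, j) * (rate_down1 c m1 (S i) j / q)
      + p (i, S j) * (rate_down2 c m2 (S j) / q)
  end.

(* Transition probability p_x(t) = P(X(t) = x | X(0) = (0,0)), via
   uniformization (valid since all rates are bounded by unif). *)
Definition trans_prob (c : nat) (l1 l2 m1 m2 : R) (x : state) (t : R) : R :=
  let q := unif c l1 l2 m1 m2 in
  Series (fun n => exp (- (q * t)) * (q * t) ^ n / INR (fact n)
                   * jump_dist c l1 l2 m1 m2 n x).

Definition Cexp (z : C) : C :=
  (exp (Re z) * cos (Im z), exp (Re z) * sin (Im z)).

(* Principal complex square root (Re >= 0). *)
Definition Csqrt (z : C) : C :=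
  (sqrt ((Cmod z + Re z) / 2),
   (if Rlt_dec (Im z) 0 then -1 else 1) * sqrt ((Cmod z - Re z) / 2)).

(* phi_{lambda,mu}(s): LST of the M/M/1 busy period. *)
Definition phi (lam mu : R) (s : C) : C :=
  let b := (RtoC (lam + mu) + s)%C in
  ((b - Csqrt (b * b - RtoC (4 * lam * mu))) / RtoC (2 * lam))%C.

Section Consts.
Variables (c : nat) (l1 l2 m1 m2 : R) (alpha : C).
Definition rho2 : R := l2 / (INR c * m2).
Definition phi2 : C := phi l2 (INR c * m2) (RtoC l1 + alpha)%C.
Definition r2 : C := (RtoC rho2 * phi2)%C.
Definition Omega2 : C :=
  (RtoC rho2 * phi2 / (RtoC l2 * (1 - RtoC rho2 * phi2 * phi2)))%C.
Definition RR1 : C := (RtoC l1 * Omega2 / (1 - r2 * phi2))%C.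
Definition RR2 : C := (r2 * phi2)%C.
End Consts.

Fixpoint binom (n k : nat) : nat :=
  match n, k with
  | _, O => 1%nat
  | O, S _ => 0%nat
  | S n', S k' => (binom n' k' + binom n' k)%nat
  end.
Definition binR (n k : nat) : R := INR (binom n k).

(* Main.v *)
Require Import Defs.
From Stdlib Require Import Reals Lra Lia Arith.
From Coquelicot Require Import Coquelicot.
Open Scope R_scope.

Lemma binom_n0 n : binom n 0 = 1%nat.
Proof. destruct n; reflexivity. Qed.

Lemma binom_gt n k : (n < k)%nat -> binom n k = 0%nat.
Proof.
  revert k; induction n as [|n IH]; intros k H; destruct k; try lia; simpl; auto.
  rewrite !IH; lia.
Qed.

Lemma binom_n1 n : binom n 1 = n.
Proof. induction n; simpl; auto. rewrite binom_n0, IHn; lia. Qed.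

Lemma binR_C n k : (k <= n)%nat -> binR n k = Binomial.C n k.
Proof.
  revert k; induction n as [|n IH]; intros k H.
  - destruct k; [|lia]. unfold binR, Binomial.C; simpl. field.
  - destruct k.
    + unfold binR, Binomial.C; rewrite binom_n0. rewrite Nat.sub_0_r. change (INR (fact 0)) with 1. change (INR 1) with 1.
      field. apply INR_fact_neq_0.
    + unfold binR; simpl binom; rewrite plus_INR.
      destruct (Nat.eq_dec k n) as [->|Hn].
      * rewrite (binom_gt n (S n)) by lia. fold (binR n n). rewrite IH by lia.
        unfold Binomial.C. rewrite !Nat.sub_diag. simpl INR at 2 4. simpl plus.
        field. repeat split; apply INR_fact_neq_0.
      * fold (binR n k) (binR n (S k)). rewrite !IH by lia. apply Binomial.pascal; lia.
Qed.

Lemma L1 N s : binR (S N) (S s) = binR N s * INR (S N) / INR (S s).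
Proof.
  destruct (le_lt_dec s N) as [H|H].
  - rewrite !binR_C by lia. unfold Binomial.C.
    replace (S N - S s)%nat with (N - s)%nat by lia.
    change (fact (S N)) with (S N * fact N)%nat.
    change (fact (S s)) with (S s * fact s)%nat.
    rewrite !mult_INR. field.
    repeat split; try apply INR_fact_neq_0; apply not_0_INR; lia.
  - unfold binR. rewrite !binom_gt by lia. simpl. lra.
Qed.

Lemma L2 N s : binR N (S s) = binR N s * (INR N - INR s) / INR (S s).
Proof.
  assert (H := L1 N s).
  assert (Hp : binR (S N) (S s) = binR N s + binR N (S s)).
  { unfold binR; simpl binom; rewrite plus_INR; reflexivity. }
  rewrite Hp in H. rewrite !S_INR in *.
  assert (0 <= INR s) by apply pos_INR.
  apply (Rmult_eq_reg_r (INR s + 1)); [|lra].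
  field_simplify in H; [|lra]. field_simplify; [|lra].
  apply (Rmult_eq_compat_r (INR s + 1)) in H.
  unfold Rdiv in H. rewrite Rmult_assoc, Rinv_l, Rmult_1_r in H by lra. nra.
Qed.
Definition E (j k l : nat) : R :=
  if Nat.ltb k j then 0 else if Nat.eqb k j then (if Nat.eqb l 0 then 1 else 0)
  else if Nat.eqb l 0 then 0 else INR j / INR (k - j) * binR (k - j) l * binR (k - 1) (l - 1).

Lemma E_lt j k l : (k < j)%nat -> E j k l = 0.
Proof. intro H; unfold E; rewrite (proj2 (Nat.ltb_lt _ _) H); auto. Qed.

Lemma E_eq j l : E j j l = if Nat.eqb l 0 then 1 else 0.
Proof. unfold E; rewrite Nat.ltb_irrefl, Nat.eqb_refl; auto. Qed.

Lemma E_gt0 j k : (j < k)%nat -> E j k 0 = 0.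
Proof.
  intro H; unfold E. rewrite (proj2 (Nat.ltb_ge _ _)) by lia.
  rewrite (proj2 (Nat.eqb_neq _ _)) by lia. auto.
Qed.

Lemma E_gtS j k l : (j < k)%nat ->
  E j k (S l) = INR j / INR (k - j) * binR (k - j) (S l) * binR (k - 1) l.
Proof.
  intro H; unfold E. rewrite (proj2 (Nat.ltb_ge _ _)) by lia.
  rewrite (proj2 (Nat.eqb_neq k j)) by lia. simpl. rewrite Nat.sub_0_r. auto.
Qed.

Lemma E_big j k l : (k < l)%nat -> E j k l = 0.
Proof.
  intro H. destruct (lt_eq_lt_dec k j) as [[H1|H1]|H1].
  - apply E_lt; auto.
  - subst; rewrite E_eq. destruct l; [lia|reflexivity].
  - destruct l; [lia|]. rewrite E_gtS by auto. unfold binR. rewrite binom_gt by lia.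
    simpl. lra.
Qed.

Lemma E_big2 j k l : (j < k)%nat -> (k - j < l)%nat -> E j k l = 0.
Proof.
  intros H H'. destruct l; [lia|]. rewrite E_gtS by auto. unfold binR. rewrite binom_gt by lia.
  simpl. lra.
Qed.

Lemma binR0 n : binR n 0 = 1.
Proof. unfold binR; rewrite binom_n0; reflexivity. Qed.
Lemma binR1 n : binR n 1 = INR n.
Proof. unfold binR; rewrite binom_n1; reflexivity. Qed.

Lemma E_local k n l : (1 <= k)%nat ->
  E k n l = E k (S n) (S l) - E (k - 1) n (S l) - E (S k) (S n) (S l) + E k n (S l).
Proof.
  intro Hk. destruct k as [|k0]; [lia|]. replace (S k0 - 1)%nat with k0 by lia.
  destruct (lt_eq_lt_dec n k0) as [[H|H]|H].
  - rewrite !E_lt by lia. lra.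
  - subst n. rewrite (E_lt (S k0) k0 l) by lia. rewrite (E_lt (S k0) k0 (S l)) by lia.
    rewrite (E_eq (S k0)), (E_eq k0).
    rewrite (E_lt (S (S k0))) by lia. simpl Nat.eqb. lra.
  - destruct (Nat.eq_dec n (S k0)) as [->|Hn].
    + rewrite !E_eq.
      rewrite !E_gtS by lia.
      replace (S (S k0) - S k0)%nat with 1%nat by lia.
      replace (S k0 - k0)%nat with 1%nat by lia.
      replace (S (S k0) - 1)%nat with (S k0) by lia.
      replace (S k0 - 1)%nat with k0 by lia.
      destruct l.
      * simpl Nat.eqb. rewrite !binR0, !binR1. rewrite S_INR. simpl INR. field.
      * simpl Nat.eqb. unfold binR. rewrite binom_gt by lia. simpl INR. lra.
    + assert (exists m, n = S (k0 + S m)) as [m ->] by (exists (n - k0 - 2)%nat; lia).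
      rewrite !E_gtS by lia.
      replace (S (S (k0 + S m)) - S k0)%nat with (S (S m)) by lia.
      replace (S (k0 + S m) - k0)%nat with (S (S m)) by lia.
      replace (S (S (k0 + S m)) - S (S k0))%nat with (S m) by lia.
      replace (S (k0 + S m) - S k0)%nat with (S m) by lia.
      replace (S (S (k0 + S m)) - 1)%nat with (S (k0 + S m)) by lia.
      replace (S (k0 + S m) - 1)%nat with (k0 + S m)%nat by lia.
      destruct l as [|r].
      * rewrite E_gt0 by lia. rewrite !binR0, !binR1. rewrite !S_INR.
        field. split; apply Rgt_not_eq; pose proof (pos_INR m); lra.
      * rewrite !E_gtS by lia.
        replace (S (k0 + S m) - S k0)%nat with (S m) by lia.
        replace (S (k0 + S m) - 1)%nat with (k0 + S m)%nat by lia.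
        rewrite (L2 (S m) (S r)), (L1 (S m) (S r)), (L1 m r).
        rewrite (L1 (k0 + S m) r), (L2 (k0 + S m) r).
        rewrite ?S_INR, ?plus_INR, ?S_INR.
        pose proof (pos_INR m); pose proof (pos_INR r); pose proof (pos_INR k0).
        field. repeat split; apply Rgt_not_eq; lra.
Qed.

Ltac cring := match goal with |- @eq _ ?x ?y => change (@eq C x y); ring end.

Lemma cs_plus (f g : nat -> C) n m :
  sum_n_m (fun k => f k + g k)%C n m = (sum_n_m f n m + sum_n_m g n m)%C.
Proof. exact (sum_n_m_plus (G:=C_AbelianMonoid) f g n m). Qed.

Lemma cs_mult_l (a : C) (f : nat -> C) n m :
  sum_n_m (fun k => a * f k)%C n m = (a * sum_n_m f n m)%C.
Proof. exact (sum_n_m_mult_l (K:=C_Ring) a f n m). Qed.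

Lemma cs_zero (f : nat -> C) n m : (forall k, (n <= k <= m)%nat -> f k = (RtoC 0)) ->
  sum_n_m f n m = (RtoC 0).
Proof.
  intro H. rewrite (sum_n_m_ext_loc f (fun k => (0 * 0)%C)) by (intros; rewrite H; auto; cring).
  rewrite cs_mult_l. cring.
Qed.

Lemma cs_swap (f : nat -> nat -> C) a b c d :
  sum_n_m (fun i => sum_n_m (fun j => f i j) a b) c d =
  sum_n_m (fun j => sum_n_m (fun i => f i j) c d) a b.
Proof.
  induction d as [|d IH].
  - destruct c.
    + rewrite sum_n_n. apply sum_n_m_ext_loc; intros; rewrite sum_n_n; auto.
    + rewrite sum_n_m_zero by lia. symmetry. apply cs_zero. intros.
      rewrite sum_n_m_zero by lia; reflexivity.
  - destruct (le_lt_dec c (S d)) as [H|H].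
    + rewrite sum_n_Sm by lia. rewrite IH.
      rewrite (sum_n_m_ext_loc (fun j => sum_n_m (fun i => f i j) c (S d))
                 (fun j => (sum_n_m (fun i => f i j) c d + f (S d) j)%C)).
      * rewrite cs_plus. reflexivity.
      * intros. rewrite sum_n_Sm by lia. reflexivity.
    + rewrite sum_n_m_zero by lia. symmetry. apply cs_zero. intros.
      rewrite sum_n_m_zero by lia; reflexivity.
Qed.

Lemma cs_shift (f : nat -> C) n :
  sum_n_m f 0 (S n) = (f 0%nat + sum_n_m (fun k => f (S k)) 0 n)%C.
Proof.
  rewrite (sum_n_m_Chasles f 0 0 (S n)) by lia. rewrite sum_n_n, sum_n_m_S. reflexivity.
Qed.

Lemma cs_tele (f G : nat -> C) i j :
  (forall k, (j <= k <= i)%nat -> f k = (G k - G (S k))%C) -> (j <= S i)%nat ->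
  sum_n_m f j i = (G j - G (S i))%C.
Proof.
  revert j; induction i as [|i IH]; intros j H Hj.
  - destruct j.
    + rewrite sum_n_n. apply H; lia.
    + assert (j = 0%nat) by lia; subst. rewrite sum_n_m_zero by lia. change (@zero C_AbelianMonoid) with (RtoC 0). cring.
  - destruct (Nat.eq_dec j (S (S i))) as [->|Hn].
    + rewrite sum_n_m_zero by lia. change (@zero C_AbelianMonoid) with (RtoC 0). cring.
    + rewrite sum_n_Sm by lia. change plus with Cplus.
      rewrite IH by (intros; try apply H; lia). rewrite H by lia. cring.
Qed.

Definition P (f : nat -> C) (b : C) (L : nat) : C :=
  sum_n_m (fun l => f l * pow_n b l)%C 0 L.

Lemma P_extend f b L0 L : (forall l, (L0 < l)%nat -> f l = (RtoC 0)) -> (L0 <= L)%nat ->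
  P f b L = P f b L0.
Proof.
  intros H HL. unfold P. rewrite (sum_n_m_Chasles _ 0 L0 L) by lia.
  rewrite (cs_zero _ (S L0) L) by (intros; rewrite H by lia; cring).
  change plus with Cplus. cring.
Qed.

Definition shiftf (f : nat -> C) (l : nat) : C :=
  match l with O => (RtoC 0) | S l' => f l' end.

Lemma P_shift f b L : (b * P f b L)%C = P (shiftf f) b (S L).
Proof.
  unfold P. rewrite cs_shift. simpl shiftf.
  rewrite <- cs_mult_l. 
  rewrite (sum_n_m_ext_loc (fun k => f k * pow_n b (S k))%C (fun k => b * (f k * pow_n b k))%C).
  - rewrite Cmult_0_l, Cplus_0_l. reflexivity.
  - intros. change (pow_n b (S k)) with (b * pow_n b k)%C. cring.
Qed.

Lemma P_plus f g b L : (P f b L + P g b L)%C = P (fun l => f l + g l)%C b L.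
Proof.
  unfold P. rewrite <- cs_plus. apply sum_n_m_ext_loc. intros; cring.
Qed.

Lemma P_ext f g b L : (forall l, (l <= L)%nat -> f l = g l) -> P f b L = P g b L.
Proof. intros H; unfold P; apply sum_n_m_ext_loc; intros; rewrite H by lia; auto. Qed.

Lemma P_sum (F : nat -> nat -> C) b L c d :
  sum_n_m (fun k => P (F k) b L) c d = P (fun l => sum_n_m (fun k => F k l) c d) b L.
Proof.
  unfold P. rewrite cs_swap. apply sum_n_m_ext_loc. intros l _.
  rewrite (sum_n_m_ext_loc _ (fun k => pow_n b l * F k l)%C) by (intros; cring).
  rewrite cs_mult_l. cring.
Qed.

Definition Cf (b : C) (j k : nat) : C := P (fun l => RtoC (E j k l)) b k.

Lemma Cf_ext b j k L : (k <= L)%nat -> Cf b j k = P (fun l => RtoC (E j k l)) b L.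
Proof.
  intro H. unfold Cf. symmetry. apply P_extend; auto. intros. rewrite E_big by lia. auto.
Qed.

Lemma Cf_lt b j k : (k < j)%nat -> Cf b j k = (RtoC 0).
Proof. intro H. unfold Cf, P. apply cs_zero. intros. rewrite E_lt by lia. cring. Qed.

Lemma Cf_eq b j : Cf b j j = (RtoC 1).
Proof.
  unfold Cf. rewrite (P_extend _ _ 0 j).
  - unfold P. rewrite sum_n_n. rewrite E_eq. simpl Nat.eqb. cbv iota. change (pow_n b 0) with (RtoC 1). cring.
  - intros. rewrite E_eq. destruct l; [lia|auto].
  - lia.
Qed.

Lemma Cf_key b j n i : (1 <= j)%nat -> (j <= S i)%nat -> (n <= i)%nat ->
  Cf b j (S n) = (Cf b (j - 1) n + b * sum_n_m (fun k' => Cf b k' n) j i)%C.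
Proof.
  intros Hj Hji Hn.
  rewrite (Cf_ext b j (S n) (S i)) by lia.
  rewrite (Cf_ext b (j - 1) n (S i)) by lia.
  rewrite (sum_n_m_ext_loc _ (fun k' => P (fun l => RtoC (E k' n l)) b i))
    by (intros; apply Cf_ext; lia).
  rewrite P_sum, P_shift, P_plus. apply P_ext. intros l _.
  destruct l as [|l]; simpl shiftf.
  - unfold E. destruct j as [|j0]; [lia|]. replace (S j0 - 1)%nat with j0 by lia.
    destruct (lt_eq_lt_dec n j0) as [[H|H]|H].
    + rewrite (proj2 (Nat.ltb_lt (S n) (S j0))) by lia.
      rewrite (proj2 (Nat.ltb_lt n j0)) by lia. cring.
    + subst. rewrite !Nat.ltb_irrefl, !Nat.eqb_refl. simpl. cring.
    + rewrite (proj2 (Nat.ltb_ge (S n) (S j0))) by lia.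
      rewrite (proj2 (Nat.ltb_ge n j0)) by lia.
      rewrite (proj2 (Nat.eqb_neq (S n) (S j0))) by lia.
      rewrite (proj2 (Nat.eqb_neq n j0)) by lia. simpl. cring.
  - rewrite (cs_tele _ (fun k => RtoC (E k (S n) (S l) - E (k - 1) n (S l))) i j).
    + assert (HG : E (S i) (S n) (S l) - E (S i - 1) n (S l) = 0).
      { replace (S i - 1)%nat with i by lia.
        destruct (Nat.eq_dec n i) as [->|Hni].
        - rewrite !E_eq. simpl. lra.
        - rewrite !E_lt by lia. lra. }
      rewrite HG. rewrite RtoC_minus. cring.
    + intros k Hk. rewrite (E_local k n l) by lia. cbv beta. rewrite <- RtoC_minus.
      f_equal. replace (S k - 1)%nat with k by lia. ring.
    + lia.
Qed.

Definition W (a b : C) (p : nat -> C) (i j : nat) : C :=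
  sum_n_m (fun k => pow_n a k * p (i - k)%nat * Cf b j k)%C 0 i.

Lemma W_rec a b p i j : (1 <= j)%nat -> (j <= S i)%nat ->
  W a b p (S i) j = (a * (W a b p i (j - 1) + b * sum_n_m (fun k' => W a b p i k') j i))%C.
Proof.
  intros Hj Hji. unfold W at 1. rewrite cs_shift. rewrite (Cf_lt b j 0) by lia.
  rewrite (sum_n_m_ext_loc _ (fun k => a * (pow_n a k * p (i - k)%nat * Cf b (j - 1) k)
      + a * b * (pow_n a k * p (i - k)%nat * sum_n_m (fun k' => Cf b k' k) j i))%C).
  2:{ intros k Hk. rewrite (Cf_key b j k i) by lia.
      change (pow_n a (S k)) with (a * pow_n a k)%C.
      replace (S i - S k)%nat with (i - k)%nat by lia. cring. }
  rewrite cs_plus, !cs_mult_l. unfold W.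
  rewrite cs_swap.
  rewrite (sum_n_m_ext_loc (fun k => sum_n_m (fun i0 => pow_n a k * p (i - k)%nat * Cf b i0 k) j i)%C
     (fun k => pow_n a k * p (i - k)%nat * sum_n_m (fun k' => Cf b k' k) j i)%C).
  2:{ intros. rewrite <- cs_mult_l. reflexivity. }
  cring.
Qed.

Lemma Cf0 b k : Cf b 0 (S k) = RtoC 0.
Proof.
  unfold Cf, P. apply cs_zero. intros l _. destruct l.
  - rewrite E_gt0 by lia. cring.
  - rewrite E_gtS by lia. simpl INR. unfold Rdiv. rewrite !Rmult_0_l. cring.
Qed.

Lemma v_W a b p (v : nat -> nat -> C) :
  v 0%nat 0%nat = p 0%nat ->
  (forall i, v (S i) 0%nat = p (S i)) ->
  (forall i j : nat, (1 <= j <= S i)%nat ->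
     v (S i) j = (a * (v i (j - 1)%nat + b * sum_n_m (fun k => v i k) j i))%C) ->
  forall i j, (j <= i)%nat -> v i j = W a b p i j.
Proof.
  intros H0 H1 HR i. induction i as [|i IH]; intros j Hj.
  - assert (j = 0%nat) by lia; subst. rewrite H0. unfold W. rewrite sum_n_n, Cf_eq.
    change (pow_n a 0) with (RtoC 1). simpl. cring.
  - destruct j as [|j].
    + rewrite H1. unfold W. rewrite cs_shift, Cf_eq, cs_zero.
      * change (pow_n a 0) with (RtoC 1). simpl. cring.
      * intros. rewrite Cf0. cring.
    + rewrite HR by lia. rewrite W_rec by lia. rewrite IH by lia.
      f_equal. f_equal. f_equal. apply sum_n_m_ext_loc. intros. apply IH. lia.
Qed.

Lemma W_closed a b p i j : (j <= i)%nat ->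
  W a b p i j =
      (pow_n a j * p (i - j)%nat
       + sum_n_m (fun k =>
           pow_n a k * p (i - k)%nat
           * sum_n_m (fun l =>
               RtoC (INR j / INR (k - j) * binR (k - j) l * binR (k - 1) (l - 1))
               * pow_n b l) 1 (k - j))
         (S j) i)%C.
Proof.
  intro Hji. unfold W. rewrite (sum_n_m_Chasles _ 0 j i) by lia.
  change plus with Cplus. f_equal.
  - destruct j as [|j].
    + rewrite sum_n_n, Cf_eq. cring.
    + rewrite sum_n_Sm by lia. rewrite cs_zero.
      * rewrite Cf_eq. change plus with Cplus. cring.
      * intros. rewrite Cf_lt by lia. cring.
  - apply sum_n_m_ext_loc. intros k Hk. f_equal.
    unfold Cf. rewrite (P_extend _ _ (k - j)).
    + replace (k - j)%nat with (S (k - j - 1)) by lia. unfold P. rewrite cs_shift.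
      rewrite E_gt0 by lia. rewrite <- sum_n_m_S.
      change (pow_n b 0) with (RtoC 1). rewrite Cmult_0_l, Cplus_0_l.
      apply sum_n_m_ext_loc. intros l Hl. rewrite E_gtS by lia.
      replace (S (k - j - 1)) with (k - j)%nat by lia. simpl (S l - 1)%nat.
      rewrite Nat.sub_0_r. reflexivity.
    + intros l Hl. rewrite E_big2 by lia. reflexivity.
    + lia.
Qed.

Theorem theorem3 (c : nat) (l1 l2 m1 m2 : R) (alpha : C)
  (pi : state -> C) (v : nat -> nat -> C) :
  (1 <= c)%nat -> 0 < l1 -> 0 < l2 -> 0 < m1 -> 0 < m2 -> 0 < Re alpha ->
  (* pi_x(alpha) = int_0^oo e^{-alpha t} p_x(t) dt *)
  (forall x : state,
     is_RInt_gen (fun t => (Cexp (- (alpha * RtoC t)) * RtoC (trans_prob c l1 l2 m1 m2 x t))%C)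
       (at_point 0) (Rbar_locally p_infty) (pi x)) ->
  v 0%nat 0%nat = pi (0%nat, (c - 1)%nat) ->
  (forall i : nat, v (S i) 0%nat = pi (S i, (c - 1)%nat)) ->
  (forall i j : nat, (1 <= j <= S i)%nat ->
     v (S i) j = (RR1 c l1 l2 m2 alpha
                  * (v i (j - 1)%nat + RR2 c l1 l2 m2 alpha * sum_n_m (fun k => v i k) j i))%C) ->
  forall i j : nat, (j <= i)%nat ->
    v i j =
      (pow_n (RR1 c l1 l2 m2 alpha) j * pi ((i - j)%nat, (c - 1)%nat)
       + sum_n_m (fun k =>
           pow_n (RR1 c l1 l2 m2 alpha) k * pi ((i - k)%nat, (c - 1)%nat)
           * sum_n_m (fun l =>
               RtoC (INR j / INR (k - j) * binR (k - j) l * binR (k - 1) (l - 1))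
               * pow_n (RR2 c l1 l2 m2 alpha) l) 1 (k - j))
         (S j) i)%C.
Proof.
  intros _ _ _ _ _ _ _ H0 H1 HR i j Hj.
  rewrite (v_W (RR1 c l1 l2 m2 alpha) (RR2 c l1 l2 m2 alpha)
             (fun m => pi (m, (c - 1)%nat)) v H0 H1 HR i j Hj).
  apply (W_closed _ _ (fun m => pi (m, (c - 1)%nat))). exact Hj.
Qed.
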